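(* Let $(\mathfrak{X},\pi)$, $a$, $s$, $S$, $m$ be as in the context. Let $z\in\mathbb{H}$, $\Phi>0$, and let $\Gamma_\Phi:(0,\infty)\to(0,\infty)$ be the strictly increasing function \[ \Gamma_\Phi(\tau):=\inf_{x\in\mathfrak{X}}\int_{\mathfrak{X}}\frac{\pi(\mathrm{d}y)}{\big(\tau^{-1}+|a_x-a_y|+\|S_x-S_y\|_2\,\Phi\big)^2}. \] If $\|m(z)\|_2\le\Phi$ and $\lim_{\tau\to\infty}\Gamma_\Phi(\tau)>\Phi^2$, then \[ \|m(z)\|\le(\Gamma_\Phi)^{-1}(\Phi^2). \]
   Context: Let $(\mathfrak{X},\pi)$ be a measure space where $\pi$ is a probability measure; $\mathcal{B}(\mathfrak{X},\mathbb{D})$ denotes bounded measurable $\mathbb{D}$-valued functions with sup norm $\|w\|=\sup_x|w_x|$; $\|\cdot\|_2$ is the norm of $L^2(\mathfrak{X},\pi)$. Let $a\in\mathcal{B}(\mathfrak{X},\mathbb{R})$, $s\in\mathcal{B}(\mathfrak{X}^2,[0,\infty))$ symmetric, $(Sw)_x=\int s_{xy}w_y\,\pi(\mathrm{d}y)$, $S_x:=(y\mapsto s_{xy})$. $m:\mathbb{H}\to\mathcal{B}(\mathfrak{X},\mathbb{H})$ is the unique solution of $-1/m(z)=z+a+Sm(z)$, $z\in\mathbb{H}$ (upper half-plane). *)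

(* Defs.v *)
From HB Require Import structures.
From mathcomp Require Import all_boot all_order all_algebra.
From mathcomp Require Import all_classical all_reals all_analysis.
From mathcomp Require Import complex.
Set Implicit Arguments. Unset Strict Implicit. Unset Printing Implicit Defensive.
Import Order.TTheory GRing.Theory Num.Theory.
Import numFieldNormedType.Exports.
Local Open Scope classical_set_scope.
Local Open Scope ring_scope.

Definition cabs (R : rcfType) (w : R[i]) : R := Normc.normc w.

Definition cRe (R : Type) (w : R[i]) : R := let: Complex u _ := w in u.
Definition cIm (R : Type) (w : R[i]) : R := let: Complex _ v := w in v.

Definition supnorm (R : realType) (T : Type) (w : T -> R[i]) : R :=
  sup (range (fun x => cabs (w x))).

Section Defs.
Context (d : measure_display) (T : measurableType d) (R : realType)
        (P : probability T R).

Definition L2normR (f : T -> R) : R :=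
  Num.sqrt (Rintegral P setT (fun y => f y ^+ 2)).

Definition L2normC (f : T -> R[i]) : R :=
  Num.sqrt (Rintegral P setT (fun y => cabs (f y) ^+ 2)).

Definition Sop (s : T -> T -> R) (w : T -> R[i]) (x : T) : R[i] :=
  Complex (Rintegral P setT (fun y => s x y * cRe (w y)))
          (Rintegral P setT (fun y => s x y * cIm (w y))).

Definition GammaPhi (a : T -> R) (s : T -> T -> R) (Phi tau : R) : \bar R :=
  ereal_inf (range (fun x =>
    (\int[P]_(y in setT)
       ((tau^-1 + `|a x - a y| + L2normR (fun y' => s x y' - s y y') * Phi)
          ^+ 2)^-1 %:E)%E)).

End Defs.

(* Main.v *)
Set Warnings "-all".
Require Import Defs.
From HB Require Import structures.
From mathcomp Require Import all_boot all_order all_algebra.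
From mathcomp Require Import all_classical all_reals all_analysis.
From mathcomp Require Import complex.
From mathcomp Require Import ring lra measurable_realfun.
Import Order.TTheory GRing.Theory Num.Theory.
Import numFieldNormedType.Exports.
Local Open Scope classical_set_scope.
Local Open Scope ring_scope.
Lemma quad_disc (R : realFieldType) (A B C : R) :
  (forall t, 0 <= A + 2 * t * C + t ^+ 2 * B) -> 0 <= B -> C ^+ 2 <= A * B.
Proof.
move=> H B0; have [Bz|Bn] := eqVneq B 0.
  have [Cz|Cn] := eqVneq C 0; first by rewrite Cz Bz expr0n /= mulr0.
  have := H (- (A + 1) / (2 * C)).
  have -> : A + 2 * (- (A + 1) / (2 * C)) * C + (- (A + 1) / (2 * C)) ^+ 2 * B = -1.
    by rewrite Bz mulr0 addr0; field; rewrite Cn.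
  by rewrite lerNr oppr0 ler10.
have Bp : 0 < B by rewrite lt_def Bn B0.
have := mulr_ge0 B0 (H (- C / B)).
have -> : B * (A + 2 * (- C / B) * C + (- C / B) ^+ 2 * B) = A * B - C ^+ 2.
  by field.
by rewrite subr_ge0.
Qed.

Section Aux.
Context {d : measure_display} {T : measurableType d} {R : realType}
  (P : probability T R).

Definition bm (f : T -> R) := measurable_fun setT f /\ exists M, forall x, `|f x| <= M.

Notation Rint f := (Rintegral P setT f).

Lemma bm_int f : bm f -> P.-integrable setT (EFin \o f).
Proof.
move=> [mf [M hM]]; apply: measurable_bounded_integrable => //.
  by have := probability_setT P; rewrite /= => ->; exact: ltry.
rewrite /bounded_near; near=> M'; move=> x _ /=.
apply: le_trans (hM x) _; near: M'; apply: nbhs_pinfty_ge; exact: num_real.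
Unshelve. all: by end_near. Qed.

Lemma bm_cst k : bm (fun _ => k).
Proof. by split; [exact: measurable_cst | exists `|k|]. Qed.

Lemma bmD f g : bm f -> bm g -> bm (fun x => f x + g x).
Proof.
move=> [mf [M hM]] [mg [N hN]]; split; first exact: measurable_funD.
by exists (M + N) => x; apply: le_trans (ler_normD _ _) _; exact: lerD.
Qed.

Lemma bmN f : bm f -> bm (fun x => - f x).
Proof.
move=> [mf [M hM]]; split; first exact: measurable_funN.
by exists M => x; rewrite normrN.
Qed.

Lemma bmB f g : bm f -> bm g -> bm (fun x => f x - g x).
Proof. by move=> hf hg; apply: bmD => //; exact: bmN. Qed.

Lemma bmM f g : bm f -> bm g -> bm (fun x => f x * g x).
Proof.
move=> [mf [M hM]] [mg [N hN]]; split; first exact: measurable_funM.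
exists (M * N) => x; rewrite normrM; apply: ler_pM => //.
Qed.

Lemma bmX f : bm f -> bm (fun x => f x ^+ 2).
Proof. by move=> hf; rewrite /bm; under eq_fun do rewrite expr2; exact: bmM. Qed.

Lemma RintD f g : bm f -> bm g -> Rint (fun x => f x + g x) = Rint f + Rint g.
Proof. by move=> hf hg; apply: RintegralD => //; exact: bm_int. Qed.

Lemma RintB f g : bm f -> bm g -> Rint (fun x => f x - g x) = Rint f - Rint g.
Proof. by move=> hf hg; apply: RintegralB => //; exact: bm_int. Qed.

Lemma RintZ k f : bm f -> Rint (fun x => k * f x) = k * Rint f.
Proof. by move=> hf; apply: RintegralZl => //; exact: bm_int. Qed.

Lemma Rint_le f g : bm f -> bm g -> (forall x, f x <= g x) -> Rint f <= Rint g.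
Proof. by move=> hf hg fg; apply: le_Rintegral => //; exact: bm_int. Qed.

Lemma Rint_ge0 f : (forall x, 0 <= f x) -> 0 <= Rint f.
Proof. by move=> f0; apply: Rintegral_ge0. Qed.

Lemma CS f g : bm f -> bm g ->
  Rint (fun x => f x * g x) ^+ 2 <=
  Rint (fun x => f x ^+ 2) * Rint (fun x => g x ^+ 2).
Proof.
move=> hf hg; apply: quad_disc; last by apply: Rint_ge0 => x; exact: sqr_ge0.
move=> t.
have := @Rint_ge0 (fun x => (f x + t * g x) ^+ 2) (fun x => sqr_ge0 _).
have -> : (fun x => (f x + t * g x) ^+ 2) = (fun x => f x ^+ 2 +
   ((2 * t) * (f x * g x) + t ^+ 2 * (g x ^+ 2))).
  by apply: funext => x; ring.
rewrite RintD; [|exact: bmX|]; last first.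
  by apply: bmD; apply: bmM; try exact: bm_cst; try exact: bmX; exact: bmM.
rewrite RintD; [|apply: bmM; [exact: bm_cst|exact: bmM]|]; last first.
  by apply: bmM; [exact: bm_cst|exact: bmX].
rewrite RintZ; last exact: bmM.
rewrite RintZ; last exact: bmX.
by rewrite addrA.
Qed.

End Aux.
Arguments bm_int {d T R P f}.
Arguments RintD {d T R P f g}.
Arguments RintB {d T R P f g}.
Arguments RintZ {d T R P} k {f}.
Arguments Rint_le {d T R P f g}.
Arguments Rint_ge0 {d T R P f}.
Arguments CS {d T R P f g}.


Section Cplx.
Context {R : rcfType}.
Implicit Types (u v w : R[i]).

Lemma cabs_ge0 w : 0 <= cabs w.
Proof. by case: w => a b; rewrite /cabs /=; exact: sqrtr_ge0. Qed.

Lemma cabs_sqr w : cabs w ^+ 2 = cRe w ^+ 2 + cIm w ^+ 2.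
Proof. by case: w => a b; rewrite /cabs /= sqr_sqrtr // addr_ge0 // sqr_ge0. Qed.

Lemma cabsD u v : cabs (u + v) <= cabs u + cabs v.
Proof.
have := lec_normD u v; rewrite /lec /cabs /=.
by case/andP.
Qed.

Lemma cabsV w : cabs w^-1 = (cabs w)^-1.
Proof. exact: Normc.normcV. Qed.

Lemma cabs_real (r : R) : cabs (Complex r 0) = `|r|.
Proof. by rewrite /cabs /= expr0n /= addr0 sqrtr_sqr. Qed.

Lemma cabs_Re w : `|cRe w| <= cabs w.
Proof.
case: w => a b; rewrite /cabs /= -sqrtr_sqr ler_sqrt ?lerDl ?sqr_ge0 //.
by rewrite addr_ge0 // sqr_ge0.
Qed.

Lemma cabs_Im w : `|cIm w| <= cabs w.
Proof.
case: w => a b; rewrite /cabs /= -sqrtr_sqr ler_sqrt ?lerDr ?sqr_ge0 //.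
by rewrite addr_ge0 // sqr_ge0.
Qed.

Lemma cabs_Complex (a b : R) : cabs (Complex a b) = Num.sqrt (a ^+ 2 + b ^+ 2).
Proof. by []. Qed.

End Cplx.
Section Aux2.
Context {d : measure_display} {T : measurableType d} {R : realType}
  (P : probability T R).
Notation Rint f := (Rintegral P setT f).

Lemma CS2 f mr mi : bm f -> bm mr -> bm mi ->
  Rint (fun y => f y * mr y) ^+ 2 + Rint (fun y => f y * mi y) ^+ 2 <=
  Rint (fun y => f y ^+ 2) * Rint (fun y => mr y ^+ 2 + mi y ^+ 2).
Proof.
move=> hf hr hi.
set A := Rint (fun y => f y * mr y); set B := Rint (fun y => f y * mi y).
set F := Rint (fun y => f y ^+ 2); set M := Rint (fun y => mr y ^+ 2 + mi y ^+ 2).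
pose h := fun y => A * mr y + B * mi y.
have hh : bm h by apply: bmD; apply: bmM => //; exact: bm_cst.
have Efh : Rint (fun y => f y * h y) = A ^+ 2 + B ^+ 2.
  have -> : (fun y => f y * h y) = (fun y => A * (f y * mr y) + B * (f y * mi y)).
    by apply: funext => y; rewrite /h; ring.
  rewrite RintD; try by apply: bmM; [exact: bm_cst| exact: bmM].
  by rewrite !RintZ ?expr2 //; exact: bmM.
have := @CS _ _ _ P _ _ hf hh; rewrite Efh.
have Hh : Rint (fun y => h y ^+ 2) <= (A ^+ 2 + B ^+ 2) * M.
  rewrite /M -RintZ; last by apply: bmD; exact: bmX.
  apply: Rint_le; [exact: bmX| apply: bmM; [exact: bm_cst| apply: bmD; exact: bmX]|].
  move=> y; rewrite /h.
  rewrite -subr_ge0.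
  have -> : (A ^+ 2 + B ^+ 2) * (mr y ^+ 2 + mi y ^+ 2) - (A * mr y + B * mi y) ^+ 2
    = (A * mi y - B * mr y) ^+ 2 by ring.
  exact: sqr_ge0.
have F0 : 0 <= F by apply: Rint_ge0 => y; exact: sqr_ge0.
have M0 : 0 <= M by apply: Rint_ge0 => y; rewrite addr_ge0 // sqr_ge0.
set K := A ^+ 2 + B ^+ 2 => HK.
have K0 : 0 <= K by rewrite addr_ge0 // sqr_ge0.
have {HK} HK : K * K <= K * (F * M).
  rewrite -expr2 (le_trans HK) //.
  rewrite mulrCA; have := ler_wpM2l F0 Hh; exact.
have [Kz|Kn] := eqVneq K 0; first by rewrite Kz; exact: mulr_ge0.
have Kp : 0 < K by rewrite lt_def Kn K0.
by rewrite -(ler_pM2l Kp).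
Qed.

End Aux2.
Section Point.
Context {d : measure_display} {T : measurableType d} {R : realType}
  (P : probability T R).
Notation Rint f := (Rintegral P setT f).

Lemma L2normR_ge0 f : 0 <= L2normR P f.
Proof. exact: sqrtr_ge0. Qed.

Lemma Sop_diff (s : T -> T -> R) (w : T -> R[i]) x y :
  (forall x, bm (s x)) -> bm (fun y => cRe (w y)) -> bm (fun y => cIm (w y)) ->
  cabs (Sop P s w x - Sop P s w y) <=
  L2normR P (fun y' => s x y' - s y y') * L2normC P w.
Proof.
move=> hs hr hi.
have eA : Rint (fun y' => s x y' * cRe (w y')) - Rint (fun y' => s y y' * cRe (w y'))
  = Rint (fun y' => (s x y' - s y y') * cRe (w y')).
  rewrite -RintB; try exact: bmM.
  by congr Rintegral; apply: funext => y'; ring.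
have eB : Rint (fun y' => s x y' * cIm (w y')) - Rint (fun y' => s y y' * cIm (w y'))
  = Rint (fun y' => (s x y' - s y y') * cIm (w y')).
  rewrite -RintB; try exact: bmM.
  by congr Rintegral; apply: funext => y'; ring.
have -> : Sop P s w x - Sop P s w y = Complex
   (Rint (fun y' => (s x y' - s y y') * cRe (w y')))
   (Rint (fun y' => (s x y' - s y y') * cIm (w y'))).
  by rewrite -eA -eB.
rewrite cabs_Complex /L2normR /L2normC -sqrtrM; last first.
  by apply: Rint_ge0 => y'; exact: sqr_ge0.
rewrite ler_sqrt; last first.
  by apply: mulr_ge0; apply: Rint_ge0 => y'; exact: sqr_ge0.
have -> : (fun y => cabs (w y) ^+ 2) = fun y => cRe (w y) ^+ 2 + cIm (w y) ^+ 2.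
  by apply: funext => y'; rewrite cabs_sqr.
apply: CS2 => //; exact: bmB.
Qed.

Lemma pointwise (a : T -> R) s (w : T -> R[i]) (z : R[i]) Phi x y :
  (forall x, bm (s x)) -> bm (fun y => cRe (w y)) -> bm (fun y => cIm (w y)) ->
  - (w x)^-1 = z + Complex (a x) 0 + Sop P s w x ->
  - (w y)^-1 = z + Complex (a y) 0 + Sop P s w y ->
  L2normC P w <= Phi ->
  (cabs (w y))^-1 <= (cabs (w x))^-1 +
     (`|a x - a y| + L2normR P (fun y' => s x y' - s y y') * Phi).
Proof.
move=> hs hr hi Hx Hy HPhi.
have hc : Complex (a x - a y) 0 = Complex (a x) 0 - Complex (a y) 0 :> R[i].
  by rewrite /GRing.add /GRing.opp /=; congr Complex; rewrite oppr0 addr0.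
have e : (w y)^-1 = (w x)^-1 + (Complex (a x - a y) 0 +
     (Sop P s w x - Sop P s w y)).
  by rewrite hc -[(w y)^-1]opprK Hy -[(w x)^-1]opprK Hx; ring.
rewrite -!cabsV e.
apply: (le_trans (cabsD _ _)).
rewrite lerD2l.
apply: (le_trans (cabsD _ _)).
rewrite cabs_real lerD2l.
apply: le_trans (Sop_diff s w x y hs hr hi) _.
by have := ler_wpM2l (L2normR_ge0 (fun y' => s x y' - s y y')) HPhi.
Qed.

End Point.
Section RealLemmas.
Context {R : realFieldType}.
Implicit Types (t c C k p q : R).

Lemma inv_cmp1 k p q : 0 < p -> 0 < q -> k * q <= p -> k * p^-1 <= q^-1.
Proof.
move=> pp qp H; rewrite -(ler_pM2r (mulr_gt0 pp qp)).
have -> : k * p^-1 * (p * q) = k * q by field; rewrite gt_eqF.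
by have -> : q^-1 * (p * q) = p by field; rewrite gt_eqF.
Qed.

Lemma inv_cmp2 k p q : 0 < p -> 0 < q -> q <= k * p -> p^-1 <= k * q^-1.
Proof.
move=> pp qp H; rewrite -(ler_pM2r (mulr_gt0 pp qp)).
have -> : p^-1 * (p * q) = q by field; rewrite gt_eqF.
by have -> : k * q^-1 * (p * q) = k * p by field; rewrite gt_eqF.
Qed.

Lemma sq_le (a b : R) : 0 <= a -> a <= b -> a ^+ 2 <= b ^+ 2.
Proof. by move=> a0 ab; rewrite lerXn2r // nnegrE // (le_trans a0). Qed.

Lemma RL1 t (t' : R) c : 0 < t' -> t' <= t -> 0 <= c ->
  (t' / t) ^+ 2 * ((t^-1 + c) ^+ 2)^-1 <= ((t'^-1 + c) ^+ 2)^-1.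
Proof.
move=> t'0 t't c0; have t0 := lt_le_trans t'0 t't.
apply: inv_cmp1; try by rewrite exprn_gt0 // ltr_wpDr // invr_gt0.
rewrite -exprMn; apply: sq_le.
  apply: mulr_ge0; first by apply: divr_ge0; exact: ltW.
  by apply: addr_ge0 => //; rewrite invr_ge0; exact: ltW.
have -> : t' / t * (t'^-1 + c) = t^-1 + (t' / t) * c by field; rewrite !gt_eqF.
rewrite lerD2l ler_piMl // ler_pdivrMr // mul1r //.
Qed.

Lemma RL2 t (t' : R) c C : 0 < t' -> t' <= t -> 0 <= c -> c <= C ->
  ((t'^-1 + c) ^+ 2)^-1 <= ((t^-1 + C) / (t'^-1 + C)) ^+ 2 * ((t^-1 + c) ^+ 2)^-1.
Proof.
move=> t'0 t't c0 cC; have t0 := lt_le_trans t'0 t't.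
have C0 := le_trans c0 cC.
have u0 : 0 < t^-1 by rewrite invr_gt0.
have u'0 : 0 < t'^-1 by rewrite invr_gt0.
have uu : t^-1 <= t'^-1 by rewrite lef_pV2 // posrE.
apply: inv_cmp2; try by rewrite exprn_gt0 // ltr_wpDr.
rewrite -exprMn; apply: sq_le; first by rewrite addr_ge0 // ltW.
have -> : (t^-1 + C) / (t'^-1 + C) * (t'^-1 + c) =
  ((t^-1 + C) * (t'^-1 + c)) / (t'^-1 + C) by rewrite mulrAC.
rewrite ler_pdivlMr ?ltr_wpDr // -subr_ge0.
have -> : (t^-1 + C) * (t'^-1 + c) - (t^-1 + c) * (t'^-1 + C) =
  (t'^-1 - t^-1) * (C - c) by ring.
by rewrite mulr_ge0 // subr_ge0.
Qed.

Lemma RL3lo t c C : 0 < t -> 0 <= c -> c <= C ->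
  ((t^-1 + C) ^+ 2)^-1 <= ((t^-1 + c) ^+ 2)^-1.
Proof.
move=> t0 c0 cC; have u0 : 0 < t^-1 by rewrite invr_gt0.
rewrite lef_pV2 ?posrE ?exprn_gt0 ?ltr_wpDr // ?(le_trans c0) //.
by apply: sq_le; [rewrite addr_ge0 // ltW | rewrite lerD2l].
Qed.

Lemma RL3hi t c : 0 < t -> 0 <= c -> ((t^-1 + c) ^+ 2)^-1 <= t ^+ 2.
Proof.
move=> t0 c0; have u0 : 0 < t^-1 by rewrite invr_gt0.
rewrite -[t in X in _ <= X]invrK exprVn.
rewrite lef_pV2 ?posrE ?exprn_gt0 ?ltr_wpDr //.
by apply: sq_le; [rewrite ltW | rewrite lerDl].
Qed.

End RealLemmas.
Section RealLemmas2.
Context {R : realFieldType}.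

Lemma RA (t ts p G : R) : 0 < t -> 0 < ts -> 0 < p -> p < G ->
  (t / ts) ^+ 2 * G <= p -> t <= ts * ((1 + p / G) / 2).
Proof.
move=> t0 ts0 p0 pG H.
have G0 : 0 < G := lt_trans p0 pG.
set x := t / ts; set q := p / G.
have x0 : 0 < x by rewrite divr_gt0.
have hx : x ^+ 2 <= q by rewrite /q ler_pdivlMr.
have q0 : 0 < q by rewrite divr_gt0.
have q1 : q < 1 by rewrite /q ltr_pdivrMr // mul1r.
have xq : x <= (1 + q) / 2.
  rewrite leNgt; apply/negP => h.
  have h2 : ((1 + q) / 2) ^+ 2 < x ^+ 2.
    by rewrite ltrXn2r // ?nnegrE ?ltW // divr_gt0 // addr_gt0.
  have : q <= ((1 + q) / 2) ^+ 2.
    rewrite -subr_ge0.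
    have -> : ((1 + q) / 2) ^+ 2 - q = ((1 - q) / 2) ^+ 2 by field.
    exact: sqr_ge0.
  lra.
have -> : t = ts * x by rewrite /x; field; rewrite gt_eqF.
by rewrite ler_pM2l.
Qed.

Lemma RB (t ts p G gv : R) : 0 < ts -> 0 < t -> 0 <= G -> G < p ->
  t <= ts * (2 * p / (p + G)) -> (ts / t) ^+ 2 * gv <= G -> gv <= p.
Proof.
move=> ts0 t0 G0 Gp ht H.
have p0 : 0 < p := le_lt_trans G0 Gp.
have pG0 : 0 < p + G by rewrite ltr_wpDr.
set c := 2 * p / (p + G).
have c0 : 0 < c by rewrite divr_gt0 // mulr_gt0.
have hgt : gv <= (t / ts) ^+ 2 * G.
  have e : gv = (t / ts) ^+ 2 * ((ts / t) ^+ 2 * gv).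
    by field; rewrite !gt_eqF.
  rewrite {1}e; apply: ler_wpM2l; [exact: sqr_ge0| exact: H].
apply: (le_trans hgt).
have h1 : (t / ts) ^+ 2 <= c ^+ 2.
  apply: sq_le; first by rewrite divr_ge0 // ltW.
  by rewrite ler_pdivrMr // mulrC.
apply: le_trans (ler_wpM2r G0 h1) _.
rewrite /c -subr_ge0.
have -> : p - (2 * p / (p + G)) ^+ 2 * G = p * ((p - G) / (p + G)) ^+ 2.
  by field; rewrite gt_eqF.
by rewrite mulr_ge0 // ?sqr_ge0 // ltW.
Qed.

End RealLemmas2.
Section Gam.
Context {d : measure_display} {T : measurableType d} {R : realType}
  (P : probability T R).
Variables (a : T -> R) (s : T -> T -> R) (Phi : R).
Hypotheses (ma : measurable_fun setT a) (ba : exists M, forall x, `|a x| <= M)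
  (ms : measurable_fun setT (fun p : T * T => s p.1 p.2))
  (bs : exists M, forall x y, s x y <= M)
  (s0 : forall x y, 0 <= s x y) (Phi0 : 0 < Phi).

Definition cc x y := `|a x - a y| + L2normR P (fun y' => s x y' - s y y') * Phi.
Definition FF x t := (\int[P]_(y in setT)
   ((t^-1 + `|a x - a y| + L2normR P (fun y' => s x y' - s y y') * Phi) ^+ 2)^-1 %:E)%E.

Lemma FFE x t : FF x t = (\int[P]_(y in setT) (((t^-1 + cc x y) ^+ 2)^-1)%:E)%E.
Proof. by rewrite /FF /cc; apply: eq_integral => y _; rewrite addrA. Qed.

Lemma GE t : GammaPhi P a s Phi t = ereal_inf (range (FF ^~ t)).
Proof. by []. Qed.

Lemma msx x : measurable_fun setT (s x).
Proof.
exact: (measurableT_comp ms (pair1_measurable x)).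
Qed.

Lemma bms x : bm (s x).
Proof.
split; first exact: msx.
by case: bs => M hM; exists M => y; rewrite ger0_norm.
Qed.

Lemma cc0 x y : 0 <= cc x y.
Proof. by rewrite addr_ge0 // mulr_ge0 // ?L2normR_ge0 // ltW. Qed.

Lemma ccm x : measurable_fun setT (cc x).
Proof.
apply: measurable_funD.
  apply: measurableT_comp; first exact: normr_measurable.
  by apply: measurable_funB => //; exact: measurable_cst.
apply: measurable_funM; last exact: measurable_cst.
apply: measurableT_comp; first exact: (continuous_measurable_fun (@sqrt_continuous R)).
pose F := fun p : T * T => ((s x p.2 - s p.1 p.2) ^+ 2)%:E.
have mF : measurable_fun setT F.
  apply/measurable_EFinP; apply: measurable_funX; apply: measurable_funB => //.
  exact: (measurableT_comp (msx x) measurable_snd).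
have F0 : forall p, (0 <= F p)%E by move=> p; rewrite lee_fin sqr_ge0.
exact: (measurableT_comp (fine_measurable measurableT)
          (measurable_fun_fubini_tonelli_F F mF F0)).
Qed.

Lemma inhab : exists x : T, True.
Proof.
case: (pselect (exists x : T, True)) => // N.
have E : [set: T] = set0 by apply/seteqP; split => // x _; apply: N; exists x.
have := probability_setT P; rewrite E measure0 => h.
have h' : (0 : R) = 1 by case: h.
by move/eqP: h'; rewrite eq_sym oner_eq0.
Qed.

Lemma intcst k : (\int[P]_(y in setT) k%:E = k%:E)%E.
Proof.
have := @integral_cst _ _ _ P setT measurableT k%:E.
by have := probability_setT P; rewrite /= => -> ->; rewrite mule1.
Qed.

Lemma Rintcst k : Rintegral P setT (fun _ => k) = k.
Proof. by rewrite /Rintegral intcst. Qed.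

Lemma ccC : exists C, 0 <= C /\ forall x y, cc x y <= C.
Proof.
case: ba => Ma hMa; case: bs => Ms hMs.
exists (`|Ma| + `|Ma| + `|Ms| * Phi); split.
  by rewrite !addr_ge0 // mulr_ge0 // ltW.
move=> x y; rewrite /cc; apply: lerD.
  apply: le_trans (ler_normB _ _) _.
  by apply: lerD; apply: le_trans (ler_norm _); [exact: hMa x| exact: hMa y].
apply: ler_wpM2r; first exact: ltW.
rewrite /L2normR -sqrtr_sqr ler_sqrt ?sqr_ge0 //.
rewrite -[X in _ <= X]Rintcst.
apply: Rint_le.
- by apply: bmX; apply: bmB; exact: bms.
- exact: bm_cst.
- move=> y'; rewrite -subr_ge0.
  have -> : Ms ^+ 2 - (s x y' - s y y') ^+ 2 =
    (Ms - s x y' + s y y') * (Ms + s x y' - s y y') by ring.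
  have := hMs x y'; have := hMs y y'; have := s0 x y'; have := s0 y y'.
  move=> h1 h2 h3 h4.
  by apply: mulr_ge0; lra.
Qed.

Lemma intle (f1 f2 : T -> R) : measurable_fun setT f1 -> measurable_fun setT f2 ->
  (forall y, 0 <= f1 y) -> (forall y, f1 y <= f2 y) ->
  (\int[P]_(y in setT) (f1 y)%:E <= \int[P]_(y in setT) (f2 y)%:E)%E.
Proof.
move=> m1 m2 p1 p12; apply: ge0_le_integral => //.
- by move=> y _; rewrite lee_fin.
- exact/measurable_EFinP.
- exact/measurable_EFinP.
- by move=> y _; rewrite lee_fin.
Qed.

Lemma intZ k (f : T -> R) : 0 <= k -> measurable_fun setT f -> (forall y, 0 <= f y) ->
  (\int[P]_(y in setT) (k * f y)%:E = k%:E * \int[P]_(y in setT) (f y)%:E)%E.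
Proof.
move=> k0 mf f0; under eq_integral do rewrite EFinM.
apply: ge0_integralZl_EFin => //.
- by move=> y _; rewrite lee_fin.
- exact/measurable_EFinP.
Qed.

Lemma phim t : 0 < t -> measurable_fun setT (fun v : R => ((t^-1 + Num.max v 0) ^+ 2)^-1).
Proof.
move=> t0; have u0 : 0 < t^-1 by rewrite invr_gt0.
apply: nonincreasing_measurable => // v w vw.

have h0 : forall v : R, 0 <= Num.max v 0 by move=> v'; rewrite le_max lexx orbT.
rewrite lef_pV2 ?posrE ?exprn_gt0 ?ltr_wpDr //.
apply: sq_le; first by rewrite addr_ge0 // ltW.
rewrite lerD2l ge_max; apply/andP; split; rewrite le_max ?lexx ?orbT //.
by rewrite vw.
Qed.

Lemma integ_m x t : 0 < t -> measurable_fun setT (fun y => ((t^-1 + cc x y) ^+ 2)^-1).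
Proof.
move=> t0.
have -> : (fun y => ((t^-1 + cc x y) ^+ 2)^-1) =
   (fun v : R => ((t^-1 + Num.max v 0) ^+ 2)^-1) \o cc x.
  by apply: funext => y /=; rewrite max_l // cc0.

exact: measurableT_comp (phim t t0) (ccm x).
Qed.

Lemma integ_ge0 x t y : 0 <= ((t^-1 + cc x y) ^+ 2)^-1.
Proof. by rewrite invr_ge0 sqr_ge0. Qed.

Section withC.
Variable C : R.
Hypothesis HC : forall x y, cc x y <= C.

Lemma FF_lo x {t} : 0 < t -> (((t^-1 + C) ^+ 2)^-1%:E <= FF x t)%E.
Proof.
move=> t0; rewrite FFE -intcst.
apply: intle.
- exact: measurable_cst.
- exact: integ_m x _ t0.
- by move=> y; rewrite invr_ge0 sqr_ge0.
- by move=> y; apply: RL3lo; [exact: t0| exact: cc0| exact: HC].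
Qed.

Lemma FF_hi x {t} : 0 < t -> (FF x t <= (t ^+ 2)%:E)%E.
Proof.
move=> t0; rewrite FFE -intcst.
apply: intle.
- exact: integ_m x _ t0.
- exact: measurable_cst.
- exact: integ_ge0.
move=> y; apply: RL3hi => //; exact: cc0.
Qed.

Lemma FF_scale_lo x {t} {t' : R} : 0 < t' -> t' <= t ->
  ((((t' / t) ^+ 2)%:E * FF x t) <= FF x t')%E.
Proof.
move=> t'0 t't; have t0 := lt_le_trans t'0 t't.
rewrite !FFE -intZ; [|exact: sqr_ge0|exact: (integ_m x t t0)|exact: integ_ge0].
apply: intle.
- by apply: measurable_funM; [exact: measurable_cst| exact: (integ_m x t t0)].
- exact: integ_m x _ t'0.
- by move=> y; rewrite mulr_ge0 ?sqr_ge0 // integ_ge0.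
- by move=> y; apply: RL1 => //; exact: cc0.
Qed.

Lemma FF_scale_hi x {t} {t' : R} : 0 < t' -> t' <= t ->
  (FF x t' <= ((((t^-1 + C) / (t'^-1 + C)) ^+ 2)%:E * FF x t))%E.
Proof.
move=> t'0 t't; have t0 := lt_le_trans t'0 t't.
rewrite !FFE -intZ; [|exact: sqr_ge0|exact: (integ_m x t t0)|exact: integ_ge0].
apply: intle.
- exact: integ_m x _ t'0.
- by apply: measurable_funM; [exact: measurable_cst| exact: (integ_m x t t0)].
- exact: integ_ge0.
- by move=> y; apply: RL2; [exact: t'0|exact: t't|exact: cc0| exact: HC].
Qed.

Definition gg t := fine (GammaPhi P a s Phi t).
Definition lo t := ((t^-1 + C) ^+ 2)^-1.

Lemma C0 : 0 <= C.
Proof. by case: inhab => x _; apply: le_trans (cc0 x x) (HC x x). Qed.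

Lemma lo_gt0 {t} : 0 < t -> 0 < lo t.
Proof.
by move=> t0; rewrite /lo invr_gt0 exprn_gt0 // ltr_wpDr ?C0 // invr_gt0.
Qed.

Lemma FF_fin x {t} : 0 < t -> FF x t = (fine (FF x t))%:E.
Proof.
move=> t0; rewrite fineK // fin_numElt.
rewrite (lt_le_trans (ltNyr _) (FF_lo x t0)).
by rewrite (le_lt_trans (FF_hi x t0) (ltry _)).
Qed.

Lemma G_fin {t} : 0 < t ->
  [/\ GammaPhi P a s Phi t = (gg t)%:E, lo t <= gg t & gg t <= t ^+ 2].
Proof.
move=> t0.
have lb : ((lo t)%:E <= GammaPhi P a s Phi t)%E.
  by rewrite GE; apply: le_ereal_inf_tmp => _ [x _ <-]; exact: FF_lo.
have ub : (GammaPhi P a s Phi t <= (t ^+ 2)%:E)%E.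
  rewrite GE; case: inhab => x0 _; apply: ge_ereal_inf; exists (FF x0 t).
    by exists x0.
  exact: FF_hi.
have fin : GammaPhi P a s Phi t \is a fin_num.
  by rewrite fin_numElt (lt_le_trans (ltNyr _) lb) (le_lt_trans ub (ltry _)).
have E : GammaPhi P a s Phi t = (gg t)%:E by rewrite /gg fineK.
split => //; by rewrite -lee_fin -E.
Qed.

Lemma G_le_FF x t : (GammaPhi P a s Phi t <= FF x t)%E.
Proof. by rewrite GE; apply: ereal_inf_lbound; exists x. Qed.

Lemma g_scale_lo {t} {t' : R} : 0 < t' -> t' <= t -> (t' / t) ^+ 2 * gg t <= gg t'.
Proof.
move=> t'0 t't; have t0 := lt_le_trans t'0 t't.
have [E1 lot _] := G_fin t0; have [E2 _ _] := G_fin t'0.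
rewrite -lee_fin -E2 GE; apply: le_ereal_inf_tmp => _ [x _ <-].
apply: le_trans (FF_scale_lo x t'0 t't).
rewrite EFinM -E1; apply: lee_pmul.
- by rewrite lee_fin sqr_ge0.
- by rewrite E1 lee_fin (le_trans (ltW (lo_gt0 t0)) lot).
- exact: lexx.
- exact: G_le_FF.
Qed.

Lemma g_scale_hi {t} {t' : R} : 0 < t' -> t' <= t ->
  gg t' <= ((t^-1 + C) / (t'^-1 + C)) ^+ 2 * gg t.
Proof.
move=> t'0 t't; have t0 := lt_le_trans t'0 t't.
set r := (t^-1 + C) / (t'^-1 + C).
have r0 : 0 < r ^+ 2.
  rewrite exprn_gt0 // divr_gt0 // ltr_wpDr ?C0 // invr_gt0 //.
have [E1 _ _] := G_fin t0; have [E2 _ _] := G_fin t'0.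
rewrite leNgt; apply/negP => H.
have : (GammaPhi P a s Phi t < (gg t' / r ^+ 2)%:E)%E.
  by rewrite E1 lte_fin ltr_pdivlMr // mulrC.
rewrite GE => /ereal_inf_lt [_ [x _ <-]].
rewrite (FF_fin x t0) lte_fin => Hx.
have H1 := FF_scale_hi x t'0 t't; rewrite (FF_fin x t0) -EFinM in H1.
have H2 := G_le_FF x t'; rewrite E2 in H2.
have := le_trans H2 H1; rewrite lee_fin.
rewrite -/r.
move: Hx; rewrite ltr_pdivlMr // => Hx Hle.
have : gg t' < gg t'.
  apply: le_lt_trans Hle _; by rewrite mulrC.
by rewrite ltxx.
Qed.

Lemma g_strict {t} {t' : R} : 0 < t' -> t' < t -> gg t' < gg t.
Proof.
move=> t'0 t't; have t0 := lt_trans t'0 t't.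
apply: le_lt_trans (g_scale_hi t'0 (ltW t't)) _.
have [_ lot _] := G_fin t0.
have gp : 0 < gg t := lt_le_trans (lo_gt0 t0) lot.
rewrite gtr_pMl //.
have u0 : 0 < t^-1 by rewrite invr_gt0.
have uu : t^-1 < t'^-1 by rewrite ltf_pV2 // posrE.
have d0 : 0 < t'^-1 + C by rewrite ltr_wpDr ?C0 // invr_gt0.
have r0 : 0 <= (t^-1 + C) / (t'^-1 + C).
  apply: divr_ge0; last exact: ltW.
  by apply: addr_ge0; [exact: ltW | exact: C0].
rewrite expr2 -[1]mulr1; apply: ltr_pM => //.
  by rewrite ltr_pdivrMr // mul1r ltrD2r.
by rewrite ltr_pdivrMr // mul1r ltrD2r.
Qed.

Lemma g_mono {t} {t' : R} : 0 < t' -> t' <= t -> gg t' <= gg t.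
Proof.
move=> t'0; rewrite le_eqVlt => /predU1P [-> //|h].
exact: ltW (g_strict t'0 h).
Qed.

Lemma lim_ex : ((Phi ^+ 2)%:E < lim (GammaPhi P a s Phi tau @[tau --> +oo%R]))%E ->
  exists t1, 0 < t1 /\ Phi ^+ 2 < gg t1.
Proof.
move=> Hl.
pose G' := fun t => GammaPhi P a s Phi (Num.max t 1).
have m1 : forall t : R, 0 < Num.max t 1.
  by move=> t; rewrite lt_max ltr01 orbT.
have ndG' : {homo G' : n m / n <= m >-> (n <= m)%E}.
  move=> n m nm; rewrite /G'.
  have [E1 _ _] := G_fin (m1 n); have [E2 _ _] := G_fin (m1 m).
  rewrite E1 E2 lee_fin; apply: g_mono => //.
  by rewrite ge_max !le_max nm lexx !orbT.
have cv : GammaPhi P a s Phi tau @[tau --> +oo%R] --> ereal_sup (range G').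
  apply: cvg_trans (nondecreasing_cvge ndG').
  apply: near_eq_cvg; near=> t.
  have t1 : 1 <= t by near: t; apply: nbhs_pinfty_ge; exact: num_real.
  by rewrite /G' max_l.
rewrite (cvg_lim (@ereal_hausdorff R) cv) in Hl.
have [_ [t _ <-]] := ereal_sup_gt Hl.
rewrite /G'; have [-> _ _] := G_fin (m1 t); rewrite lte_fin => h.
by exists (Num.max t 1); split.
Unshelve. all: by end_near. Qed.

End withC.
Lemma main_sec (mz : T -> R[i]) (z : R[i]) :
  bm (fun y => cRe (mz y)) -> bm (fun y => cIm (mz y)) ->
  (forall x, 0 < cIm (mz x)) ->
  (forall x, - (mz x)^-1 = z + Complex (a x) 0 + Sop P s mz x) ->
  L2normC P mz <= Phi ->
  ((Phi ^+ 2)%:E < lim (GammaPhi P a s Phi tau @[tau --> +oo%R]))%E ->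
  (exists tau, 0 < tau /\ GammaPhi P a s Phi tau = (Phi ^+ 2)%:E) /\
  (forall tau, 0 < tau -> GammaPhi P a s Phi tau = (Phi ^+ 2)%:E ->
     supnorm mz <= tau).
Proof.
move=> hr hi Hpos Heq HL2 Hlim.
have [C [_ HC]] := ccC.
move: (@G_fin C HC) (@g_scale_lo C HC) (@g_strict C HC) (@g_mono C HC)
  (@lim_ex C HC) => Gf gsl gst gmo lex.
have Phi2 : 0 < Phi ^+ 2 by rewrite exprn_gt0.
split.
  have [t1 [t10 Ht1]] := lex Hlim.
  have [_ _ gPhi] := Gf _ Phi0.
  have Pt1 : Phi < t1.
    rewrite ltNge; apply/negP => h.
    have := gmo _ _ t10 h => h2.
    have : Phi ^+ 2 < Phi ^+ 2 := lt_le_trans Ht1 (le_trans h2 gPhi).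
    by rewrite ltxx.
  pose S := [set t | 0 < t /\ t <= t1 /\ gg t <= Phi ^+ 2].
  have SPhi : S Phi by split => //; split => //; exact: ltW.
  have hS : has_sup S.
    by split; [exists Phi | exists t1 => t [_ [h _]]].
  set ts := sup S.
  have Phits : Phi <= ts := ub_le_sup hS.2 SPhi.
  have tst1 : ts <= t1 by apply: ge_sup hS.1 _ => t [_ [h _]].
  have ts0 : 0 < ts := lt_le_trans Phi0 Phits.
  have [Ets lots _] := Gf _ ts0.
  have gts0 : 0 < gg ts := lt_le_trans (lo_gt0 C HC ts0) lots.
  have A : gg ts <= Phi ^+ 2.
    rewrite leNgt; apply/negP => hlt.
    have ub : ubound S (ts * ((1 + Phi ^+ 2 / gg ts) / 2)).
      move=> t [t0 [tt1 gt']].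
      have tle : t <= ts := ub_le_sup hS.2 (conj t0 (conj tt1 gt')).
      apply: RA => //.
      exact: le_trans (gsl _ _ t0 tle) gt'.
    have := ge_sup hS.1 ub; rewrite -/ts.
    have q1 : Phi ^+ 2 / gg ts < 1 by rewrite ltr_pdivrMr // mul1r.
    have h3 : (1 + Phi ^+ 2 / gg ts) / 2 < 1 by lra.
    by rewrite leNgt gtr_pMr ?h3.
  have B : Phi ^+ 2 <= gg ts.
    rewrite leNgt; apply/negP => hlt.
    have tst1' : ts < t1.
      rewrite lt_neqAle tst1 andbT; apply/eqP => e.
      by move: Ht1; rewrite -e => h; have := lt_trans h hlt; rewrite ltxx.
    pose c := 2 * Phi ^+ 2 / (Phi ^+ 2 + gg ts).
    have pG0 : 0 < Phi ^+ 2 + gg ts by rewrite addr_gt0.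
    have c1 : 1 < c by rewrite /c ltr_pdivlMr // mul1r; lra.
    pose t := Num.min t1 (ts * c).
    have tts : ts < t.
      by rewrite /t lt_min tst1' /= ltr_pMr.
    have t0 : 0 < t := lt_trans ts0 tts.
    have St : S t.
      split => //; split; first by rewrite /t ge_min lexx.
      apply: (@RB _ t ts _ _ _ ts0 t0 (ltW gts0) hlt); first by rewrite /t ge_min lexx orbT.
      exact: gsl _ _ ts0 (ltW tts).
    have := ub_le_sup hS.2 St; rewrite -/ts leNgt tts.
    by [].
  exists ts; split => //; rewrite Ets; congr EFin; apply/le_anti; rewrite A B.
  by [].
move=> tau tau0 Etau.
have [E _ _] := Gf _ tau0.
have gtau : gg tau = Phi ^+ 2 by move: Etau; rewrite E => -[].
have cpos : forall y, 0 < cabs (mz y).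
  move=> y; apply: lt_le_trans (Hpos y) _.
  exact: le_trans (ler_norm _) (cabs_Im _).
rewrite /supnorm; apply: ge_sup.
  by case: inhab => x0 _; exists (cabs (mz x0)); exists x0.
move=> _ [x _ <-].
set t := cabs (mz x).
have t0 : 0 < t := cpos x.
rewrite leNgt; apply/negP => taut.
have hlt := gst _ _ tau0 taut.
have bmc : bm (fun y => cabs (mz y) ^+ 2).
  have -> : (fun y => cabs (mz y) ^+ 2) = fun y => cRe (mz y) ^+ 2 + cIm (mz y) ^+ 2.
    by apply: funext => y; rewrite cabs_sqr.
  by apply: bmD; exact: bmX.
have EI : (\int[P]_(y in setT) (cabs (mz y) ^+ 2)%:E)%E =
    (Rintegral P setT (fun y => cabs (mz y) ^+ 2))%:E.
  by rewrite fineK // integrable_fin_num // bm_int.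
have hFF : (FF x t <= (Phi ^+ 2)%:E)%E.
  rewrite FFE; apply: le_trans (intle _ (fun y => cabs (mz y) ^+ 2) _ _ _ _) _.
  - exact: integ_m x _ t0.
  - exact: bmc.1.
  - exact: integ_ge0.
  - move=> y.
    have hp := pointwise P a s mz z Phi x y bms hr hi (Heq x) (Heq y) HL2.
    rewrite [X in _ <= X](_ : _ = (((cabs (mz y))^-1) ^+ 2)^-1); last first.
      by rewrite exprVn invrK.
    rewrite lef_pV2 ?posrE ?exprn_gt0 ?invr_gt0 ?cpos //; last first.
      by rewrite ltr_wpDr ?cc0 // invr_gt0.
    apply: sq_le; first by rewrite invr_ge0 ltW // cpos.
    exact: hp.
  rewrite EI lee_fin.
  have I0 : 0 <= Rintegral P setT (fun y => cabs (mz y) ^+ 2).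
    by apply: Rint_ge0 => y; exact: sqr_ge0.
  rewrite -(sqr_sqrtr I0); apply: sq_le => //; exact: sqrtr_ge0.
have [Et _ _] := Gf _ t0.
have : gg t <= Phi ^+ 2.
  by rewrite -lee_fin -Et; apply: le_trans (G_le_FF x t) hFF.
rewrite -gtau => h.
by have := lt_le_trans hlt h; rewrite ltxx.
Qed.
End Gam.

Theorem mainTheorem6 (d : measure_display) (T : measurableType d) (R : realType)
  (P : probability T R)
  (a : T -> R) (s : T -> T -> R) (m : R[i] -> T -> R[i])
  (z : R[i]) (Phi : R) :
  (* a in B(X, R) *)
  measurable_fun setT a ->
  (exists M : R, forall x, `|a x| <= M) ->
  (* s in B(X^2, [0, oo)), symmetric *)
  measurable_fun setT (fun p : T * T => s p.1 p.2) ->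
  (exists M : R, forall x y, s x y <= M) ->
  (forall x y, 0 <= s x y) ->
  (forall x y, s x y = s y x) ->
  (* m : H -> B(X, H) solves  -1/m(z) = z + a + S m(z)  for all z in H *)
  (forall w : R[i], 0 < cIm w ->
     [/\ measurable_fun setT (fun x => cRe (m w x)),
         measurable_fun setT (fun x => cIm (m w x)),
         (exists M : R, forall x, cabs (m w x) <= M),
         (forall x, 0 < cIm (m w x)) &
         (forall x, - (m w x)^-1 = w + Complex (a x) 0 + Sop P s (m w) x)]) ->
  (* z in H, Phi > 0 *)
  0 < cIm z -> 0 < Phi ->
  (* ||m(z)||_2 <= Phi *)
  L2normC P (m z) <= Phi ->
  (* lim_{tau -> oo} Gamma_Phi(tau) > Phi^2 *)
  ((Phi ^+ 2)%:E < lim (GammaPhi P a s Phi tau @[tau --> +oo%R]))%E ->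
  (* ||m(z)|| <= Gamma_Phi^{-1}(Phi^2) *)
  (exists tau : R, 0 < tau /\ GammaPhi P a s Phi tau = (Phi ^+ 2)%:E) /\
  (forall tau : R, 0 < tau -> GammaPhi P a s Phi tau = (Phi ^+ 2)%:E ->
     supnorm (m z) <= tau).
Proof.
move=> ma ba ms bs s0 ssym Hm Hz Phi0 HL2 Hlim.
have [mr mi [Mm hMm] Hpos Heq] := Hm z Hz.
apply: main_sec => //.
- split => //; exists Mm => x; exact: le_trans (cabs_Re _) (hMm x).
- split => //; exists Mm => x; exact: le_trans (cabs_Im _) (hMm x).
Qed.
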